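(* Let $F$ be a positive integer and $S\in\mathrm{Sat}(F)$. Then for every integer $g$ with $\mathrm{g}(S)\le g\le F$ there exists $T\in\mathrm{Sat}(F)$ with $\mathrm{g}(T)=g$.
   Context: A numerical semigroup is a subset $S\subseteq\mathbb{N}$ closed under addition, containing $0$, with $\mathbb{N}\setminus S$ finite. Its genus $\mathrm{g}(S)$ is the cardinality of $\mathbb{N}\setminus S$, and its Frobenius number $\mathrm{F}(S)$ is the largest integer not in $S$. For $A\subseteq\mathbb{N}$ and $a\in A$, let $\mathrm{d}_A(a)=\gcd\{x\in A\mid x\le a\}$. A numerical semigroup $S$ is saturated if $s+\mathrm{d}_S(s)\in S$ for all $s\in S\setminus\{0\}$. For a positive integer $F$, $\mathrm{Sat}(F)$ denotes the set of all saturated numerical semigroups $S$ with $\mathrm{F}(S)=F$. *)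

(* Defs.v *)
From mathcomp Require Import all_boot.

Definition numerical_semigroup (S : pred nat) : Prop :=
  [/\ S 0,
      (forall x y, S x -> S y -> S (x + y)) &
      exists N, forall n, N <= n -> S n].

Definition is_frobenius (S : pred nat) (F : nat) : Prop :=
  ~~ S F /\ forall n, F < n -> S n.

Definition is_genus (S : pred nat) (g : nat) : Prop :=
  exists N, (forall n, N <= n -> S n) /\ count (predC S) (iota 0 N) = g.

Definition dA (A : pred nat) (a : nat) : nat :=
  foldr gcdn 0 [seq x <- iota 0 a.+1 | A x].

Definition saturated (S : pred nat) : Prop :=
  numerical_semigroup S /\
  forall s, S s -> 0 < s -> S (s + dA S s).

Definition in_Sat (F : nat) (S : pred nat) : Prop :=
  saturated S /\ is_frobenius S F.

(* Main.v *)
Require Import Defs.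
From mathcomp Require Import all_boot.
From mathcomp Require Import zify.

Lemma foldr_gcd_dvd (l : seq nat) x : x \in l -> foldr gcdn 0 l %| x.
Proof.
elim: l => //= y l IH; rewrite in_cons => /orP [/eqP -> | /IH H].
- exact: dvdn_gcdl.
- exact: dvdn_trans (dvdn_gcdr _ _) H.
Qed.

Lemma dvd_foldr_gcd (l : seq nat) d :
  (forall x, x \in l -> d %| x) -> d %| foldr gcdn 0 l.
Proof.
elim: l => [|y l IH] H /=; first exact: dvdn0.
rewrite dvdn_gcd H ?mem_head //= IH // => x Hx; apply: H; by rewrite in_cons Hx orbT.
Qed.

Lemma dA_dvd (A : pred nat) a x : A x -> x <= a -> dA A a %| x.
Proof.
move=> Ax xa; apply: foldr_gcd_dvd; rewrite mem_filter Ax mem_iota /=; lia.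
Qed.

Lemma dvd_dA (A : pred nat) a d :
  (forall x, A x -> x <= a -> d %| x) -> d %| dA A a.
Proof.
move=> H; apply: dvd_foldr_gcd => x; rewrite mem_filter mem_iota => /andP [Ax /andP[_ ha]].
apply: H => //; lia.
Qed.

Lemma count_tail (P : pred nat) a n :
  (forall x, a <= x -> P x) -> count (predC P) (iota a n) = 0.
Proof.
elim: n a => [|n IH] a H //=.
rewrite IH; last by move=> x hx; apply: H; lia.
by rewrite (H a (leqnn a)).
Qed.

Lemma genus_count (P : pred nat) F N : ~~ P F -> (forall n, F < n -> P n) ->
  (forall n, N <= n -> P n) ->
  count (predC P) (iota 0 N) = count (predC P) (iota 0 F.+1).
Proof.
move=> nPF HF HN.
have hN : F < N.
  rewrite ltnNge; apply/negP => h; by rewrite HN in nPF.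
rewrite -(subnKC hN) iotaD count_cat add0n (@count_tail P F.+1) ?addn0 // => x hx; apply: HF; lia.
Qed.

Lemma count_mem_uniq (L s : seq nat) :
  uniq L -> {subset L <= s} -> uniq s -> count (mem L) s = size L.
Proof.
move=> uL sub us; rewrite -size_filter; apply: perm_size.
apply: uniq_perm; [exact: filter_uniq | exact: uL |].
move=> x; rewrite mem_filter; apply/andP/idP => [[]//|h]; split => //; exact: sub h.
Qed.

Theorem lemma27 (F : nat) (S : pred nat) (gS : nat) :
  0 < F -> in_Sat F S -> is_genus S gS ->
  forall g : nat, gS <= g <= F ->
  exists T : pred nat, in_Sat F T /\ is_genus T g.
Proof.
move=> F0 [[[S0 Sadd Sfin] Ssat] [nSF SF]] [N [HN HgS]] g /andP [hg1 hg2].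
have gSe : gS + count S (iota 1 F) = F.
  rewrite -HgS (@genus_count S F N nSF SF HN).
  move: (count_predC S (iota 0 F.+1)); rewrite size_iota /= S0 /=; lia.
have [d [d0 [ndF Hd]]] : exists d, 0 < d /\ ~~ (d %| F) /\
    (forall x, S x -> 0 < x -> x <= F -> d %| x).
  have [hx|nhx] := boolP (has S (iota 1 F)).
    pose P := fun x => S x && (x \in iota 1 F).
    have exP : exists x, P x.
      by case/hasP: hx => x xi Sx; exists x; rewrite /P Sx xi.
    have ubP : forall x, P x -> x <= F.
      by move=> x /andP[_]; rewrite mem_iota; lia.
    case: (ex_maxnP exP ubP) => sr /andP[Ssr]; rewrite mem_iota => sri smax.
    have dsr : dA S sr %| sr by apply: dA_dvd.
    have d0 : 0 < dA S sr.
      case: (posnP (dA S sr)) => [e|//]; move: dsr; rewrite e dvd0n; lia.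
    exists (dA S sr); split => //; split.
      apply/negP => dF.
      have srF : sr < F.
        have : sr != F by apply/eqP => e; rewrite -e Ssr in nSF.
        lia.
      have Ssd := Ssat sr Ssr ltac:(lia).
      have hdv : dA S sr %| F - sr by apply: dvdn_sub.
      have hle : dA S sr <= F - sr by apply: dvdn_leq => //; lia.
      have : P (sr + dA S sr) by rewrite /P Ssd mem_iota; lia.
      move/smax; lia.
    move=> x Sx x0 xF; apply: dA_dvd => //; apply: smax; rewrite /P Sx mem_iota; lia.
  exists F.+1; split => //; split.
    by apply/negP => /(dvdn_leq F0); rewrite ltnn.
  move=> x Sx x0 xF; move/hasPn: nhx => nh.
  have : x \in iota 1 F by rewrite mem_iota; lia.
  by move/nh; rewrite Sx.
pose q := F %/ d.
have cnt : count S (iota 1 F) <= q.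
  rewrite -size_filter.
  have -> : q = size [seq d * i | i <- iota 1 q] by rewrite size_map size_iota.
  apply: uniq_leq_size; first by apply: filter_uniq; exact: iota_uniq.
  move=> x; rewrite mem_filter mem_iota => /andP [Sx hx].
  have dx : d %| x by apply: Hd => //; lia.
  apply/mapP; exists (x %/ d); last by rewrite mulnC divnK.
  rewrite mem_iota divn_gt0 // (dvdn_leq _ dx); last lia.
  have := @leq_div2r d x F ltac:(lia); rewrite /q; lia.
pose k := F - g.
have kq : k <= q by rewrite /k; lia.
pose j := q - k + 1.
pose T : pred nat := fun x => (x == 0) || ((F < x) || ((d * j <= x) && (d %| x))).
have TF : ~~ T F.
  rewrite /T (negbTE ndF) andbF ltnn /=; lia.
have Thi : forall n, F < n -> T n.
  by move=> n hn; rewrite /T hn orbT.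
exists T; split.
  split; last by split.
  split; first split.
  - by rewrite /T eqxx.
  - move=> x y; rewrite /T => /orP[/eqP->|/orP[Fx|/andP[mx dx]]]; first by rewrite add0n.
      by move=> _; rewrite (_ : F < x + y) ?orbT //; lia.
    move=> /orP[/eqP->|/orP[Fy|/andP[my dy]]]; first by rewrite addn0 mx dx !orbT.
      by rewrite (_ : F < x + y) ?orbT //; lia.
    by rewrite (leq_trans mx (leq_addr _ _)) dvdn_add // !orbT.
  - by exists F.+1.
  move=> s Ts s0.
  case: (ltnP F s) => sF.
    by apply: Thi; lia.
  move: Ts; rewrite /T => /orP[/eqP e|/orP[Fs|/andP[ms ds]]]; first lia.
    lia.
  have dd : d %| dA T s.
    apply: dvd_dA => x; rewrite /T => /orP[/eqP->|/orP[Fx|/andP[_ dx]]] // xs.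
    lia.
  by rewrite (leq_trans ms (leq_addr _ _)) dvdn_add // !orbT.
exists F.+1; split; first by move=> n hn; apply: Thi.
have cT : count T (iota 1 F) = k.
  pose L := [seq d * i | i <- iota j k].
  have -> : count T (iota 1 F) = count (mem L) (iota 1 F).
    apply: eq_in_count => x; rewrite mem_iota => hx.
    rewrite /T (_ : (x == 0) = false); last by apply/eqP; lia.
    rewrite (_ : (F < x) = false) /=; last lia.
    apply/andP/mapP.
      move=> [mx dx]; exists (x %/ d); last by rewrite mulnC divnK.
      have h1 := @leq_div2r d _ _ mx; rewrite mulKn // in h1.
      have h2 := @leq_div2r d x F ltac:(lia).
      rewrite mem_iota; rewrite /j /q in h1 h2 *; lia.
    move=> [i]; rewrite mem_iota => hi ->.
    by rewrite leq_pmul2l // dvdn_mulr //; lia.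
  rewrite count_mem_uniq ?size_map ?size_iota ?iota_uniq //.
    rewrite map_inj_uniq ?iota_uniq // => a b /eqP; rewrite eqn_pmul2l // => /eqP //.
  move=> x /mapP [i]; rewrite mem_iota => hi ->; rewrite mem_iota.
  have h1 : d * i <= d * q by rewrite leq_pmul2l //; lia.
  have h2 : q * d <= F by apply: leq_divM.
  have h3 : 0 < d * i by rewrite muln_gt0 d0; lia.
  rewrite mulnC in h2; lia.
move: (count_predC T (iota 0 F.+1)); rewrite size_iota /=.
rewrite cT /k; lia.
Qed.
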